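(* Let $(\Omega,+)$ be a group and $(a,b)$ a pair of subgroups. Then: (1) the set $a^\top\cap{}^\top b=\{x: a\top x,\ x\top b\}$ is stable under $(x,y,z)\mapsto\Gamma(x,a,y,b,z)$, and with the induced law it is a torsor, denoted $U_{ab}$; (2) the set $b^\top\cap{}^\top a=\{x: b\top x,\ x\top a\}$ is stable under $(x,y,z)\mapsto\check\Gamma(x,a,y,b,z)$, and with the induced law it is a torsor, denoted $\check U_{ab}$; (3) $\check U_{ba}=U_{ab}^{opp}$, i.e. $\check U_{ba}$ (the set $a^\top\cap{}^\top b$ with law $\check\Gamma(x,b,y,a,z)$) coincides with the set $a^\top\cap{}^\top b$ with the opposite law $(x,y,z)\mapsto\Gamma(z,a,y,b,x)$.
   Context: $(\Omega,+)$ is a group written additively but not necessarily abelian. For subsets $x,y$, $x\top y$ means every $\omega$ has a unique decomposition $\omega=\xi+\eta$ with $\xi\in x,\eta\in y$. $\Gamma(x,a,y,b,z)=\{\omega:\exists\alpha\in a,\beta\in b:\ \alpha+\omega+\beta\in y,\ \alpha+\omega\in z,\ \omega+\beta\in x\}$; $\check\Gamma(x,a,y,b,z)=\{\omega:\exists\alpha\in a,\beta\in b:\ \beta+\omega+\alpha\in y,\ \omega+\alpha\in z,\ \beta+\omega\in x\}$. A torsor is a set with a ternary map $(xyz)$ satisfying $(xy(zuv))=(x(uzy)v)=((xyz)uv)$ and $(xxy)=y=(yxx)$. *)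

(* Defs.v *)
Set Implicit Arguments.

Record group := Group {
  carrier :> Type;
  gadd : carrier -> carrier -> carrier;
  gzero : carrier;
  gopp : carrier -> carrier;
  gaddA : forall x y z, gadd x (gadd y z) = gadd (gadd x y) z;
  gadd0l : forall x, gadd gzero x = x;
  gaddNl : forall x, gadd (gopp x) x = gzero
}.

Arguments gadd {g}. Arguments gzero {g}. Arguments gopp {g}.
Notation "x + y" := (gadd x y).

Definition subset (O : group) := O -> Prop.

Definition is_subgroup (O : group) (a : subset O) : Prop :=
  a gzero /\ (forall x y, a x -> a y -> a (x + y)) /\ (forall x, a x -> a (gopp x)).

Definition top (O : group) (x y : subset O) : Prop :=
  forall w : O, exists! p : O * O, x (fst p) /\ y (snd p) /\ w = fst p + snd p.

Definition Gamma (O : group) (x a y b z : subset O) : subset O :=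
  fun w => exists al be, a al /\ b be /\ y (al + w + be) /\ z (al + w) /\ x (w + be).

Definition Gamma_check (O : group) (x a y b z : subset O) : subset O :=
  fun w => exists al be, a al /\ b be /\ y (be + w + al) /\ z (w + al) /\ x (be + w).

Definition stable (T : Type) (S : T -> Prop) (m : T -> T -> T -> T) : Prop :=
  forall x y z, S x -> S y -> S z -> S (m x y z).

Definition torsor_on (T : Type) (S : T -> Prop) (m : T -> T -> T -> T) : Prop :=
  (forall x y z u v, S x -> S y -> S z -> S u -> S v ->
     m x y (m z u v) = m x (m u z y) v /\ m x (m u z y) v = m (m x y z) u v) /\
  (forall x y, S x -> S y -> m x x y = y /\ m y x x = y).

Definition Uset (O : group) (a b : subset O) : subset O -> Prop :=
  fun x => top a x /\ top x b.

(* Main.v *)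
Require Import Defs.
From Stdlib Require Import FunctionalExtensionality PropExtensionality.

Section G.
Variable O : group.
Implicit Types x y z u v w : O.

Lemma gaddNr x : x + gopp x = gzero.
Proof.
  rewrite <- (gadd0l _ (x + gopp x)).
  rewrite <- (gaddNl _ (gopp x)) at 1.
  rewrite <- gaddA, (gaddA _ (gopp x) x (gopp x)), gaddNl, gadd0l, gaddNl. reflexivity.
Qed.

Lemma gaddr0 x : x + gzero = x.
Proof. rewrite <- (gaddNl _ x), gaddA, gaddNr, gadd0l. reflexivity. Qed.

Lemma gaddKr x y : x + y + gopp y = x.
Proof. rewrite <- gaddA, gaddNr, gaddr0. reflexivity. Qed.

Lemma gaddNKr x y : x + gopp y + y = x.
Proof. rewrite <- gaddA, gaddNl, gaddr0. reflexivity. Qed.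

Lemma gaddcl x y z : x + y = x + z -> y = z.
Proof. intro H. rewrite <- (gadd0l _ y), <- (gadd0l _ z), <- (gaddNl _ x), <- !gaddA, H. reflexivity. Qed.

Lemma gaddcr x y z : y + x = z + x -> y = z.
Proof. intro H. rewrite <- (gaddKr y x), <- (gaddKr z x), H. reflexivity. Qed.

Lemma goppK x : gopp (gopp x) = x.
Proof. apply (gaddcl (gopp x)). rewrite gaddNr, gaddNl. reflexivity. Qed.

Lemma goppD x y : gopp (x + y) = gopp y + gopp x.
Proof. apply (gaddcl (x + y)). rewrite gaddNr, gaddA, gaddKr, gaddNr. reflexivity. Qed.

Lemma gopp0 : gopp (@gzero O) = gzero.
Proof. rewrite <- (gadd0l _ (gopp gzero)), gaddNr. reflexivity. Qed.

Lemma gopp_inj x y : gopp x = gopp y -> x = y.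
Proof. intro H. rewrite <- (goppK x), H, goppK. reflexivity. Qed.
End G.

Ltac simplg := do 4 (rewrite ?goppD, ?goppK, ?gopp0, ?gaddA, ?gaddKr, ?gaddNKr, ?gaddNl, ?gaddNr, ?gadd0l, ?gaddr0).
Ltac simplg_in H := do 4 (rewrite ?goppD, ?goppK, ?gopp0, ?gaddA, ?gaddKr, ?gaddNKr, ?gaddNl, ?gaddNr, ?gadd0l, ?gaddr0 in H).

Section T.
Variable O : group.
Variables a b : subset O.
Hypothesis Ha : is_subgroup a.
Hypothesis Hb : is_subgroup b.

Lemma top_ex (p q : subset O) : top p q -> forall w, exists s t, p s /\ q t /\ w = s + t.
Proof. intros T w. destruct (T w) as [[s t] [[H1 [H2 H3]] _]]. exists s, t; auto. Qed.

Lemma top_uniq (p q : subset O) : top p q -> forall s t s' t',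
  p s -> q t -> p s' -> q t' -> s + t = s' + t' -> s = s' /\ t = t'.
Proof.
  intros T s t s' t' H1 H2 H3 H4 E.
  destruct (T (s + t)) as [[s0 t0] [_ U]].
  assert (E1 := U (s,t) (conj H1 (conj H2 eq_refl))).
  assert (E2 := U (s',t') (conj H3 (conj H4 E))).
  rewrite E1 in E2. injection E2. auto.
Qed.

Arguments top_ex {p q}. Arguments top_uniq {p q}.
Lemma sg0 (c : subset O) : is_subgroup c -> c gzero.
Proof. intros [h _]; exact h. Qed.
Lemma sgD (c : subset O) : is_subgroup c -> forall x y, c x -> c y -> c (x + y).
Proof. intros [_ [h _]]; exact h. Qed.
Lemma sgN (c : subset O) : is_subgroup c -> forall x, c x -> c (gopp x).
Proof. intros [_ [_ h]]; exact h. Qed.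

Lemma uniqA x y z : Uset a b x -> Uset a b y -> Uset a b z ->
  forall p q p' q', a p -> Gamma x a y b z q -> a p' -> Gamma x a y b z q' ->
  p + q = p' + q' -> p = p' /\ q = q'.
Proof.
  intros [ax xb] [ay yb] [az zb] p q p' q' Hp [al [be [Hal [Hbe [Hy [Hz Hx]]]]]]
    Hp' [al' [be' [Hal' [Hbe' [Hy' [Hz' Hx']]]]]] E.
  destruct (top_uniq az (p + gopp al) (al + q) (p' + gopp al') (al' + q'))
    as [_ E1]; auto.
  { apply sgD; auto; apply sgN; auto. }
  { apply sgD; auto; apply sgN; auto. }
  { simplg. exact E. }
  destruct (top_uniq yb (al + q + be) (gopp be) (al' + q' + be') (gopp be'))
    as [_ E2]; auto.
  { apply sgN; auto. }
  { apply sgN; auto. }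
  { simplg. exact E1. }
  apply gopp_inj in E2. subst be'.
  destruct (top_uniq ax p (q + be) p' (q' + be)) as [E3 E4]; auto.
  { rewrite !gaddA, E. reflexivity. }
  split; [exact E3|]. eapply gaddcr; exact E4.
Qed.

Lemma uniqB x y z : Uset a b x -> Uset a b y -> Uset a b z ->
  forall p q p' q', b p -> Gamma x a y b z q -> b p' -> Gamma x a y b z q' ->
  q + p = q' + p' -> p = p' /\ q = q'.
Proof.
  intros [ax xb] [ay yb] [az zb] p q p' q' Hp [al [be [Hal [Hbe [Hy [Hz Hx]]]]]]
    Hp' [al' [be' [Hal' [Hbe' [Hy' [Hz' Hx']]]]]] E.
  destruct (top_uniq xb (q + be) (gopp be + p) (q' + be') (gopp be' + p'))
    as [E1 _]; auto.
  { apply sgD; auto; apply sgN; auto. }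
  { apply sgD; auto; apply sgN; auto. }
  { simplg. exact E. }
  destruct (top_uniq ay (gopp al) (al + q + be) (gopp al') (al' + q' + be'))
    as [E2 _]; auto.
  { apply sgN; auto. }
  { apply sgN; auto. }
  { simplg. exact E1. }
  apply gopp_inj in E2. subst al'.
  destruct (top_uniq zb (al + q) p (al + q') p') as [E3 E4]; auto.
  { rewrite <- !gaddA, E. reflexivity. }
  split; [exact E4|]. eapply gaddcl; exact E3.
Qed.

Arguments uniqA {x y z} _ _ _ {p q p' q'}. Arguments uniqB {x y z} _ _ _ {p q p' q'}.
Lemma stab x y z : Uset a b x -> Uset a b y -> Uset a b z -> Uset a b (Gamma x a y b z).
Proof.
  intros Ux Uy Uz. pose proof Ux as [ax xb]. pose proof Uy as [ay yb]. pose proof Uz as [az zb].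
  split.
  - intro w.
    destruct (top_ex az w) as [a0 [z0 [Ha0 [Hz0 Ew]]]].
    destruct (top_ex yb z0) as [y0 [b0 [Hy0 [Hb0 Ez0]]]].
    destruct (top_ex ax (w + gopp b0)) as [a1 [x1 [Ha1 [Hx1 Ew1]]]].
    assert (G : Gamma x a y b z (gopp a1 + w)).
    { exists (gopp a0 + a1), (gopp b0).
        split; [apply sgD; auto; apply sgN; auto|].
        split; [apply sgN; auto|].
        split; [|split].
        -- rewrite Ew, Ez0. simplg. exact Hy0.
        -- rewrite Ew. simplg. exact Hz0.
        -- assert (E : gopp a1 + w + gopp b0 = x1).
           { rewrite <- gaddA, Ew1. simplg. reflexivity. }
           rewrite E. exact Hx1. }
    exists (a1, gopp a1 + w). split.
    + simpl. split; [exact Ha1|split; [exact G|]]. simplg. reflexivity.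
    + intros [p q] [Hp [Hq Ew']]. simpl in *.
      destruct (uniqA Ux Uy Uz Ha1 G Hp Hq) as [-> ->]; [|reflexivity].
      simplg. exact Ew'.
  - intro w.
    destruct (top_ex xb w) as [x0 [b0 [Hx0 [Hb0 Ew]]]].
    destruct (top_ex ay x0) as [a0 [y0 [Ha0 [Hy0 Ex0]]]].
    destruct (top_ex zb (gopp a0 + w)) as [z1 [b1 [Hz1 [Hb1 Ew1]]]].
    assert (G : Gamma x a y b z (w + gopp b1)).
    { exists (gopp a0), (b1 + gopp b0).
        split; [apply sgN; auto|].
        split; [apply sgD; auto; apply sgN; auto|].
        split; [|split].
        -- simplg. rewrite Ew, Ex0. simplg. exact Hy0.
        -- rewrite gaddA, Ew1. simplg. exact Hz1.
        -- simplg. rewrite Ew. simplg. exact Hx0. }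
    exists (w + gopp b1, b1). split.
    + simpl. split; [exact G|split; [exact Hb1|]]. simplg. reflexivity.
    + intros [q p] [Hq [Hp Ew']]. simpl in *.
      destruct (uniqB Ux Uy Uz Hb1 G Hp Hq) as [-> ->]; [|reflexivity].
      simplg. exact Ew'.
Qed.

Lemma set_ext (p q : subset O) : (forall w, p w <-> q w) -> p = q.
Proof. intro H. apply functional_extensionality; intro w. apply propositional_extensionality. apply H. Qed.

Lemma id1 x y : Uset a b x -> Uset a b y -> Gamma x a x b y = y.
Proof.
  intros [ax xb] [ay yb]. apply set_ext; intro w; split.
  - intros [al [be [Hal [Hbe [H1 [H2 H3]]]]]].
    destruct (top_uniq ax (gopp al) (al + w + be) gzero (w + be)) as [E _]; auto.
    { apply sgN; auto. } { apply sg0; auto. }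
    { simplg. reflexivity. }
    assert (al = gzero) by (rewrite <- (goppK _ al), E; apply gopp0).
    subst al. rewrite gadd0l in H2. exact H2.
  - intro Hw. destruct (top_ex xb w) as [s [t [Hs [Ht E]]]].
    exists gzero, (gopp t). split; [apply sg0; auto|]. split; [apply sgN; auto|].
    rewrite gadd0l. assert (w + gopp t = s) by (rewrite E; simplg; reflexivity).
    rewrite H. auto.
Qed.

Lemma id2 x y : Uset a b x -> Uset a b y -> Gamma y a x b x = y.
Proof.
  intros [ax xb] [ay yb]. apply set_ext; intro w; split.
  - intros [al [be [Hal [Hbe [H1 [H2 H3]]]]]].
    destruct (top_uniq xb (al + w + be) gzero (al + w) be) as [_ E]; auto.
    { apply sg0; auto. }
    { simplg. reflexivity. }
    subst be. rewrite gaddr0 in H3. exact H3.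
  - intro Hw. destruct (top_ex ax w) as [s [t [Hs [Ht E]]]].
    exists (gopp s), gzero. split; [apply sgN; auto|]. split; [apply sg0; auto|].
    rewrite !gaddr0. assert (gopp s + w = t) by (rewrite E; simplg; reflexivity).
    rewrite H. auto.
Qed.

Definition chain (x y z u v : subset O) (w : O) : Prop :=
  exists b1 a1 b2 a2, b b1 /\ a a1 /\ b b2 /\ a a2 /\
    x (w + b1) /\ y (a1 + w + b1) /\ z (a1 + w + b2) /\ u (a2 + w + b2) /\ v (a2 + w).

Ltac sg := repeat (match goal with |- a (_ + _) => apply (sgD _ Ha) | |- a (gopp _) => apply (sgN _ Ha) | |- b (_ + _) => apply (sgD _ Hb) | |- b (gopp _) => apply (sgN _ Hb) end).

Lemma chain1 x y z u v w : Gamma x a y b (Gamma z a u b v) w <-> chain x y z u v w.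
Proof.
  split.
  - intros [al [be [Hal [Hbe [H1 [[al' [be' [Hal' [Hbe' [H2 [H3 H4]]]]]] H5]]]]]].
    exists be, al, be', (al' + al). simplg_in H2. simplg_in H3. simplg_in H4.
    repeat split; sg; simplg; auto.
  - intros [b1 [a1 [b2 [a2 [Hb1 [Ha1 [Hb2 [Ha2 [H1 [H2 [H3 [H4 H5]]]]]]]]]]]].
    exists a1, b1. repeat split; sg; auto.
    exists (a2 + gopp a1), b2. repeat split; sg; simplg; auto.
Qed.

Lemma chain2 x y z u v w : Gamma (Gamma x a y b z) a u b v w <-> chain x y z u v w.
Proof.
  split.
  - intros [al [be [Hal [Hbe [H1 [H2 [al' [be' [Hal' [Hbe' [H3 [H4 H5]]]]]]]]]]]].
    exists (be + be'), al', be, al. simplg_in H3. simplg_in H4. simplg_in H5.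
    repeat split; sg; simplg; auto.
  - intros [b1 [a1 [b2 [a2 [Hb1 [Ha1 [Hb2 [Ha2 [H1 [H2 [H3 [H4 H5]]]]]]]]]]]].
    exists a2, b2. repeat split; sg; auto.
    exists a1, (gopp b2 + b1). repeat split; sg; simplg; auto.
Qed.

Lemma chain3 x y z u v w : Gamma x a (Gamma u a z b y) b v w <-> chain x y z u v w.
Proof.
  split.
  - intros [al [be [Hal [Hbe [[al' [be' [Hal' [Hbe' [H3 [H4 H5]]]]]] [H1 H2]]]]]].
    exists be, (al' + al), (be + be'), al. simplg_in H3. simplg_in H4. simplg_in H5.
    repeat split; sg; simplg; auto.
  - intros [b1 [a1 [b2 [a2 [Hb1 [Ha1 [Hb2 [Ha2 [H1 [H2 [H3 [H4 H5]]]]]]]]]]]].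
    exists a2, b1. repeat split; sg; auto.
    exists (a1 + gopp a2), (gopp b1 + b2). repeat split; sg; simplg; auto.
Qed.

Lemma torsorU : torsor_on (Uset a b) (fun x y z => Gamma x a y b z).
Proof.
  split.
  - intros x y z u v _ _ _ _ _. split; apply set_ext; intro w.
    + rewrite chain1, chain3; tauto.
    + rewrite chain3, chain2; tauto.
  - intros x y Ux Uy. split; [apply id1|apply id2]; auto.
Qed.
End T.

Lemma torsor_opp (T : Type) (S : T -> Prop) m :
  torsor_on S m -> torsor_on S (fun x y z => m z y x).
Proof.
  intros [A I]. split.
  - intros x y z u v Sx Sy Sz Su Sv. destruct (A v u z y x Sv Su Sz Sy Sx) as [E1 E2].
    split; congruence.
  - intros x y Sx Sy. destruct (I x y Sx Sy) as [E1 E2]. split; cbv beta; assumption.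
Qed.

Lemma check_swap (O : group) (x a y b z : subset O) :
  Gamma_check x a y b z = Gamma z b y a x.
Proof.
  apply set_ext; intro w; split.
  - intros [al [be [H1 [H2 [H3 [H4 H5]]]]]]. exists be, al. tauto.
  - intros [al [be [H1 [H2 [H3 [H4 H5]]]]]]. exists be, al. tauto.
Qed.

Theorem theorem7p3 (O : group) (a b : subset O) :
  is_subgroup a -> is_subgroup b ->
  (* (1) U_ab *)
  (stable (Uset a b) (fun x y z => Gamma x a y b z) /\
   torsor_on (Uset a b) (fun x y z => Gamma x a y b z)) /\
  (* (2) check U_ab on b^⊤ ∩ ^⊤a *)
  (stable (Uset b a) (fun x y z => Gamma_check x a y b z) /\
   torsor_on (Uset b a) (fun x y z => Gamma_check x a y b z)) /\
  (* (3) check U_ba = U_ab^opp *)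
  (forall x y z, Uset a b x -> Uset a b y -> Uset a b z ->
     Gamma_check x b y a z = Gamma z a y b x).
Proof.
  intros Ha Hb.
  assert (F : (fun x y z => Gamma_check x a y b z) = (fun x y z => Gamma z b y a x)).
  { apply functional_extensionality; intro x. apply functional_extensionality; intro y.
    apply functional_extensionality; intro z. apply check_swap. }
  split; [|split].
  - split; [intros x y z; apply stab; auto | apply torsorU; auto].
  - rewrite F. split.
    + intros x y z Sx Sy Sz. apply stab; auto.
    + apply (@torsor_opp _ _ (fun x y z => Gamma x b y a z)). apply torsorU; auto.
  - intros x y z _ _ _. apply check_swap.
Qed.
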